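(* Let $S[1..n]$ be a string. Given the lcp array and rank array of $S$, one can compute all useful LLRs of $S$ (listed in increasing order of start position) in $O(n)$ time and space.
   Context: For $1\le i\le j\le n$, $S[i..j]=S[i]\cdots S[j]$. A substring is unique if it has no other occurrence starting at a different position; it is a repeat otherwise. The left-bounded longest repeat starting at position $k$, $\mathrm{LLR}_k$, is a repeat $S[k..j]$ such that either $j=n$ or $S[k..j+1]$ is unique (it does not exist if $S[k]$ is unique). An LLR is useless if its position interval is contained in that of another LLR; otherwise it is useful. The suffix array $SA[1..n]$ is the permutation of $\{1,\ldots,n\}$ listing the starting positions of suffixes of $S$ in increasing lexicographic order (a proper prefix is smaller). The rank array is its inverse: $\mathrm{Rank}[i]=j$ iff $SA[j]=i$. The lcp array $\mathrm{LCP}[1..n+1]$ has $\mathrm{LCP}[1]=\mathrm{LCP}[n+1]=0$ and, for $2\le i\le n$, $\mathrm{LCP}[i]$ is the length of the longest common prefix of $S[SA[i-1]..n]$ and $S[SA[i]..n]$. Complexity is in the word-RAM model with each integer in $\{0,\ldots,n+1\}$ occupying a constant number of words. *)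

(* Defs.v *)
From mathcomp Require Import all_boot all_order.
Set Implicit Arguments. Unset Strict Implicit. Unset Printing Implicit Defensive.
Import Order.TTheory.

(* Strings, suffixes, substrings (1-based positions as in the paper). *)
Section Strings.
Variables (d : Order.disp_t) (T : orderType d).

Definition suf (S : seq T) (i : nat) : seq T := drop i.-1 S.

Definition substr (S : seq T) (i j : nat) : seq T := take (j - i).+1 (drop i.-1 S).

Fixpoint lexlt (s t : seq T) : bool :=
  match s, t with
  | [::], [::] => false
  | [::], _ :: _ => true
  | _ :: _, [::] => false
  | x :: s', y :: t' => (x < y)%O || ((x == y) && lexlt s' t')
  end.

Fixpoint lcp_len (s t : seq T) : nat :=
  match s, t with
  | x :: s', y :: t' => if x == y then (lcp_len s' t').+1 else 0
  | _, _ => 0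
  end.

Definition occurs_at (S : seq T) (i j p : nat) : bool :=
  [&& 1 <= p, p + (j - i) <= size S & substr S p (p + (j - i)) == substr S i j].

Definition is_repeat (S : seq T) (i j : nat) : bool :=
  has (fun p => (p != i) && occurs_at S i j p) (iota 1 (size S)).

Definition is_unique (S : seq T) (i j : nat) : bool := ~~ is_repeat S i j.

Definition is_LLR (S : seq T) (k j : nat) : bool :=
  [&& 1 <= k, k <= j, j <= size S, is_repeat S k j &
      (j == size S) || is_unique S k j.+1].

Definition is_useful_LLR (S : seq T) (k j : nat) : bool :=
  is_LLR S k j &&
  ~~ has (fun k' => has (fun j' => [&& is_LLR S k' j', (k', j') != (k, j),
                                     k' <= k & j <= j'])
                        (iota 1 (size S)))
         (iota 1 (size S)).

Definition useful_LLRs (S : seq T) : seq (nat * nat) :=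
  [seq kj <- [seq (k, j) | k <- iota 1 (size S), j <- iota 1 (size S)]
   | is_useful_LLR S kj.1 kj.2].

Definition is_rank (S : seq T) (rk : nat -> nat) : Prop :=
  let n := size S in
  (forall i, 1 <= i <= n -> 1 <= rk i <= n) /\
  {in [pred i | 1 <= i <= n] &, injective rk} /\
  (forall i j, 1 <= i <= n -> 1 <= j <= n ->
     (rk i < rk j) = lexlt (suf S i) (suf S j)).

(* lcpa : nat -> nat is the lcp array LCP[1..n+1] of S, given its rank
   array rk: LCP[1] = LCP[n+1] = 0 and LCP[Rank[j]] is the lcp of the
   suffixes SA[Rank[j]-1] = i and SA[Rank[j]] = j. *)
Definition is_lcp (S : seq T) (rk : nat -> nat) (lcpa : nat -> nat) : Prop :=
  let n := size S in
  lcpa 1 = 0 /\ lcpa n.+1 = 0 /\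
  (forall i j, 1 <= i <= n -> 1 <= j <= n -> rk j = (rk i).+1 ->
     lcpa (rk j) = lcp_len (suf S i) (suf S j)).

End Strings.

(* A minimal word-RAM: finitely many registers (those named by the    *)
(* program), a random-access memory, unit-cost instructions.          *)
Inductive instr : Type :=
  | IConst of nat & nat
  | IAdd of nat & nat & nat
  | ISub of nat & nat & nat    (* r := a - b (truncated)       *)
  | ILoad of nat & nat
  | IStore of nat & nat
  | IJz of nat & nat
  | IJlt of nat & nat & nat
  | IJmp of nat
  | IOut of nat
  | IHalt.

Record config := Config {
  pc : nat; regs : nat -> nat; mem : nat -> nat; out : seq nat }.

Definition upd (f : nat -> nat) (a v : nat) : nat -> nat :=
  fun x => if x == a then v else f x.

Definition cur_instr (P : seq instr) (c : config) : instr := nth IHalt P (pc c).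

Definition halted (P : seq instr) (c : config) : bool :=
  if cur_instr P c is IHalt then true else false.

Definition step (P : seq instr) (c : config) : config :=
  let R := regs c in let M := mem c in let p := pc c in
  match cur_instr P c with
  | IConst r v => Config p.+1 (upd R r v) M (out c)
  | IAdd r a b => Config p.+1 (upd R r (R a + R b)) M (out c)
  | ISub r a b => Config p.+1 (upd R r (R a - R b)) M (out c)
  | ILoad r a => Config p.+1 (upd R r (M (R a))) M (out c)
  | IStore a b => Config p.+1 R (upd M (R a) (R b)) (out c)
  | IJz a l => Config (if R a == 0 then l else p.+1) R M (out c)
  | IJlt a b l => Config (if R a < R b then l else p.+1) R M (out c)
  | IJmp l => Config l R M (out c)
  | IOut a => Config p.+1 R M (rcons (out c) (R a))
  | IHalt => c
  end.

(* The step from c respects the space bound A (every memory address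
   accessed is < A) and the word bound W (every value written is < W). *)
Definition step_ok (P : seq instr) (A W : nat) (c : config) : bool :=
  let R := regs c in let M := mem c in
  match cur_instr P c with
  | IConst _ v => v < W
  | IAdd _ a b => R a + R b < W
  | ILoad _ a => (R a < A) && (M (R a) < W)
  | IStore a b => (R a < A) && (R b < W)
  | _ => true
  end.

Definition runs_within (P : seq instr) (M0 : nat -> nat)
    (Tmax A W : nat) (o : seq nat) : Prop :=
  let c0 := Config 0 (fun _ => 0) M0 [::] in
  exists t, [/\ t <= Tmax,
    halted P (iter t (step P) c0),
    out (iter t (step P) c0) = o &
    forall i, i < t -> step_ok P A W (iter i (step P) c0)].

Definition input_mem (n : nat) (rk lcpa : nat -> nat) : nat -> nat :=
  fun x => if x == 0 then n
           else if x <= n then rk x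
           else if x <= n + n.+1 then lcpa (x - n)
           else 0.

Definition encode_pairs (s : seq (nat * nat)) : seq nat :=
  flatten [seq [:: kj.1; kj.2] | kj <- s].

(* Main.v *)
Require Import Defs.
From mathcomp Require Import all_boot all_order.
From mathcomp Require Import zify.

Definition Prog : seq instr :=
 [:: ILoad 1 0; IConst 4 1; IConst 2 1; IJlt 1 2 22;
     ILoad 5 2; IAdd 6 1 5; ILoad 7 6; IAdd 6 6 4; ILoad 8 6;
     IAdd 9 7 0; IJlt 8 7 12; IAdd 9 8 0; IJz 9 20;
     IAdd 10 2 9; ISub 10 10 4; IJlt 3 10 17; IJmp 20;
     IOut 2; IOut 10; IAdd 3 10 0; IAdd 2 2 4; IJmp 3; IHalt].

Definition runsle A W (c : config) (T : nat) (c' : config) : Prop :=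
  exists t, t <= T /\ iter t (step Prog) c = c' /\
    forall i, i < t -> step_ok Prog A W (iter i (step Prog) c).

Lemma fwd A W (Q : config -> Prop) c T :
  step_ok Prog A W c ->
  (exists c2, runsle A W (step Prog c) T c2 /\ Q c2) ->
  exists c2, runsle A W c T.+1 c2 /\ Q c2.
Proof.
move=> ok [c2 [[t [tT [it Hok]]] Qc]]; exists c2; split=> //.
exists t.+1; split; first by [].
split; first by rewrite iterSr. 
by case=> [|i] // ; rewrite ltnS => /Hok; rewrite iterSr.
Qed.

Lemma fin A W (Q : config -> Prop) c T : Q c -> exists c2, runsle A W c T c2 /\ Q c2.
Proof. by move=> q; exists c; split=> //; exists 0. Qed.



Lemma runsle_trans A W c T1 c1 T2 c2 :
  runsle A W c T1 c1 -> runsle A W c1 T2 c2 -> runsle A W c (T1 + T2) c2.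
Proof.
move=> [t1 [h1 [e1 o1]]] [t2 [h2 [e2 o2]]]; exists (t2 + t1); split; first lia.
split; first by rewrite iterD e1.
move=> i hi; case: (ltnP i t1) => hi1; first exact: o1.
have -> : i = (i - t1) + t1 by lia.
rewrite iterD e1; apply: o2; lia.
Qed.

Ltac okt := rewrite /step_ok /cur_instr /= /upd /=.
Ltac stt := rewrite /step /cur_instr /=.
Ltac solveok E HW := okt; rewrite ?E;
  first [done | (apply/andP; split; [lia | apply: HW; lia]) | (apply: HW; lia)].
Ltac S1 E HW := apply: fwd; [solveok E HW | stt; rewrite /upd /= ?E].

Lemma part1 A W n k best r a b R M o :
  R 0 = 0 -> R 1 = n -> R 2 = k -> R 3 = best -> R 4 = 1 ->
  M k = r -> M (n + r) = a -> M (n + r + 1) = b ->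
  1 <= k <= n -> r <= n -> a <= n -> b <= n ->
  2*n+1 < A -> (forall x, x <= 2*n+2 -> x < W) ->
  exists c2, runsle A W (Config 3 R M o) 9 c2 /\
   [/\ pc c2 = 12 /\ Defs.mem c2 = M, regs c2 0 = 0 /\ regs c2 1 = n,
       regs c2 2 = k /\ regs c2 4 = 1, regs c2 3 = best /\ regs c2 9 = maxn a b
     & out c2 = o].
Proof.
move=> R0 R1 R2 R3 R4 Mk Ma Mb /andP[k1 kn] rn an bn HA HW.
have E := (R0, R1, R2, R3, R4, Mk, Ma, Mb).
apply: fwd; first by okt.
stt; rewrite /upd /= R1 R2 ltnNge kn /=.
do 6 S1 E HW.
apply: fwd; first by okt.
stt; rewrite /upd /= ?E.
case Cab: (b < a).
  apply: fin => /=; rewrite ?E addn0; split => //.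
  by rewrite /maxn ltnNge ltnW.
S1 E HW.
apply: fin => /=; rewrite ?E addn0; split => //.
by rewrite /maxn; case: ltngtP Cab => //= ->.
Qed.


Lemma part2 A W n k best L R M o :
  R 0 = 0 -> R 1 = n -> R 2 = k -> R 3 = best -> R 4 = 1 -> R 9 = L ->
  1 <= k <= n -> k + L <= n.+1 ->
  2*n+1 < A -> (forall x, x <= 2*n+2 -> x < W) ->
  exists c2, runsle A W (Config 12 R M o) 9 c2 /\
   [/\ pc c2 = 3 /\ Defs.mem c2 = M, regs c2 0 = 0 /\ regs c2 1 = n,
       regs c2 2 = k.+1 /\ regs c2 4 = 1,
       regs c2 3 = (if (0 < L) && (best < (k + L).-1) then (k + L).-1 else best)
     & out c2 = o ++ (if (0 < L) && (best < (k + L).-1)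
                      then [:: k; (k + L).-1] else [::])].
Proof.
move=> R0 R1 R2 R3 R4 R9 /andP[k1 kn] kL HA HW.
have E := (R0, R1, R2, R3, R4, R9).
apply: fwd; first by okt.
stt; rewrite /upd /= ?E.
case: (posnP L) => [L0|Lp].
  rewrite ?L0 ?eqxx /=.
  S1 E HW.
  S1 E HW.
  apply: fin => /=; rewrite ?E /= cats0 addn1; by split.
rewrite ?(gtn_eqF Lp) ?Lp /=.
S1 E HW.
S1 E HW.
apply: fwd; first by okt.
stt; rewrite /upd /= ?E subn1.
case Cb: (best < (k + L).-1).
  S1 E HW. S1 E HW. S1 E HW. S1 E HW. S1 E HW.
  apply: fin => /=; rewrite ?E addn0 addn1 /=; split => //; by rewrite -!cats1 -catA.
S1 E HW. S1 E HW. S1 E HW.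
apply: fin => /=; rewrite ?E addn1 /= cats0; by split.
Qed.

Definition bestf (f : nat -> nat) k := \max_(1 <= i < k | 0 < f i) (i + f i).-1.
Definition item (f : nat -> nat) i :=
  if (0 < f i) && (bestf f i < (i + f i).-1) then [:: i; (i + f i).-1] else [::].
Definition outl (f : nat -> nat) k := flatten [seq item f i | i <- iota 1 k.-1].

Lemma bestfS f k : 1 <= k -> bestf f k.+1 =
  if (0 < f k) && (bestf f k < (k + f k).-1) then (k + f k).-1 else bestf f k.
Proof.
move=> k1; rewrite /bestf big_mkcond big_nat_recr //= -big_mkcond /=.
case: (0 < f k) => /=; last by rewrite maxn0.
by rewrite /maxn.
Qed.

Lemma outlS f k : 1 <= k -> outl f k.+1 = outl f k ++ item f k.
Proof.
move=> k1; rewrite /outl /=.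
have -> : k = k.-1 + 1 by lia.
rewrite iotaD map_cat flatten_cat /= cats0 addn1 /=.
by rewrite add1n.
Qed.

Definition memok n (f : nat -> nat) (M0 : nat -> nat) :=
  forall k, 1 <= k <= n -> exists r, [/\ M0 k = r, r <= n, M0 (n+r) <= n,
    M0 (n+r+1) <= n & maxn (M0 (n+r)) (M0 (n+r+1)) = f k].

Lemma loop A W n f M0 :
  memok n f M0 -> (forall k, 1 <= k <= n -> k + f k <= n.+1) ->
  2*n+1 < A -> (forall x, x <= 2*n+2 -> x < W) ->
  forall m k R o, k + m = n.+1 -> 1 <= k ->
  R 0 = 0 -> R 1 = n -> R 2 = k -> R 3 = bestf f k -> R 4 = 1 -> o = outl f k ->
  exists c2, runsle A W (Config 3 R M0 o) (18 * m + 1) c2 /\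
    pc c2 = 22 /\ out c2 = outl f n.+1.
Proof.
move=> Hm Hf HA HW; elim=> [|m IH] k R o km k1 R0 R1 R2 R3 R4 ->.
  rewrite addn0 in km.
  apply: fwd; first by okt.
  stt; rewrite /upd /= R1 R2 km ltnSn.
  by apply: fin.
have kn : k <= n by lia.
have kk : 1 <= k <= n by rewrite k1 kn.
have [r [Mk rn an bn Mf]] := Hm k kk.
have [c1 [H1 [[pc1 mem1] [r0 r1] [r2 r4] [r3 r9] o1]]] :=
  part1 A W n k (bestf f k) r (M0 (n+r)) (M0 (n+r+1)) R M0 (outl f k) R0 R1 R2 R3 R4 Mk erefl erefl kk rn an bn HA HW.
case: c1 pc1 mem1 r0 r1 r2 r4 r3 r9 o1 H1 => p1 R' M' o' /= -> -> r0 r1 r2 r4 r3 r9 -> H1.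
have kL : k + maxn (M0 (n + r)) (M0 (n + r + 1)) <= n.+1 by rewrite Mf; apply: Hf; lia.
have [c2 [H2 [[pc2 mem2] [s0 s1] [s2 s4] s3 o2]]] :=
  part2 A W n k (bestf f k) _ R' M0 (outl f k) r0 r1 r2 r3 r4 r9 kk kL HA HW.
case: c2 pc2 mem2 s0 s1 s2 s4 s3 o2 H2 => p2 R'' M'' o'' /= -> -> s0 s1 s2 s4 s3 o2 H2.
have [c3 [H3 [pc3 o3]]] := IH k.+1 R'' o'' ltac:(lia) ltac:(lia) s0 s1 s2
  ltac:(by rewrite s3 bestfS // Mf) s4 ltac:(by rewrite o2 outlS // Mf).
exists c3; split => //.
have -> : 18 * m.+1 + 1 = 9 + (9 + (18 * m + 1)) by lia.
apply: runsle_trans H1 _; exact: runsle_trans H2 H3.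
Qed.

Lemma machine n f M0 :
  M0 0 = n -> memok n f M0 -> (forall k, 1 <= k <= n -> k + f k <= n.+1) ->
  runs_within Prog M0 (20 * n + 20) (20 * n + 20) ((n.+2) ^ 20) (outl f n.+1).
Proof.
move=> M00 Hm Hf.
have HA : 2*n+1 < 20 * n + 20 by lia.
have HW : forall x, x <= 2*n+2 -> x < (n.+2) ^ 20.
  move=> x hx; apply: (leq_trans (n := (n.+2)^2)).
    rewrite expnS expn1; nia.
  by rewrite leq_exp2l.
have E := M00.
have [c [Hc [pc22 oc]]] :
  exists c2, runsle (20 * n + 20) ((n.+2) ^ 20) (Config 0 (fun _ => 0) M0 [::])
     (3 + (18 * n + 1)) c2 /\ pc c2 = 22 /\ out c2 = outl f n.+1.
  apply: fwd; first by okt; rewrite M00; apply/andP; split; [lia|apply: HW; lia].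
  stt; rewrite /upd /= M00.
  apply: fwd; first by okt; apply: HW; lia.
  stt; rewrite /upd /=.
  apply: fwd; first by okt; apply: HW; lia.
  stt; rewrite /upd /=.
  apply: (@loop _ _ _ _ _ Hm Hf HA HW n 1) => //.
  by rewrite /bestf big_geq.
case: c Hc pc22 oc => p R M o [t [tT [it Hok]]] /= p22 oE; subst p.
exists t; split.
- lia.
- by rewrite it.
- by rewrite it.
- exact: Hok.
Qed.

Import Order.TTheory.

Lemma lcp_take d (T : orderType d) (s t : seq T) m :
  (m <= lcp_len s t) = [&& m <= size s, m <= size t & take m s == take m t].
Proof.
elim: s t m => [|x s IH] [|y t] [|m] //=; rewrite ?andbF //.
rewrite eqseq_cons; case: (x == y) => //=.
by rewrite ltnS IH.
by rewrite !andbF.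
Qed.

Lemma lcp_sym d (T : orderType d) (s t : seq T) : lcp_len s t = lcp_len t s.
Proof.
elim: s t => [|x s IH] [|y t] //=; rewrite eq_sym; case: (y == x) => //; by rewrite IH.
Qed.

Lemma lcp_size d (T : orderType d) (s t : seq T) : lcp_len s t <= size s.
Proof.
elim: s t => [|x s IH] [|y t] //=; case: (x == y) => //; by rewrite ltnS IH.
Qed.

Lemma lexA d (T : orderType d) (x y z : seq T) :
  lexlt x y -> lexlt y z -> lcp_len x z <= lcp_len y z.
Proof.
elim: x y z => [|a x IH] [|b y] [|c z] //=.
case/orP => [ab | /andP[/eqP ab xy]]; case/orP => [bc | /andP[/eqP bc yz]].
- by rewrite (lt_eqF (lt_trans ab bc)).
- by rewrite -bc (lt_eqF ab).
- by rewrite ab (lt_eqF bc).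
- by rewrite ab bc eqxx ltnS IH.
Qed.

Lemma lexB d (T : orderType d) (x y z : seq T) :
  lexlt x y -> lexlt y z -> lcp_len x z <= lcp_len x y.
Proof.
elim: x y z => [|a x IH] [|b y] [|c z] //=.
case/orP => [ab | /andP[/eqP ab xy]]; case/orP => [bc | /andP[/eqP bc yz]].
- by rewrite (lt_eqF (lt_trans ab bc)).
- by rewrite -bc (lt_eqF ab).
- by rewrite ab (lt_eqF bc).
- by rewrite ab bc eqxx ltnS IH.
Qed.

Lemma rk_surj n (rk : nat -> nat) :
  (forall i, 1 <= i <= n -> 1 <= rk i <= n) ->
  {in [pred i | 1 <= i <= n] &, injective rk} ->
  forall r, 1 <= r <= n -> exists i, 1 <= i <= n /\ rk i = r.
Proof.
move=> rng inj r hr.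
have U : uniq (map rk (iota 1 n)).
  rewrite map_inj_in_uniq ?iota_uniq // => x y; rewrite !mem_iota => hx hy.
  apply: inj; rewrite inE; lia.
have sub : {subset map rk (iota 1 n) <= iota 1 n}.
  move=> x /mapP [i]; rewrite !mem_iota => hi ->.
  have := rng i; lia.
have [_ eqm] := uniq_min_size U sub ltac:(by rewrite size_map).
have : r \in map rk (iota 1 n) by rewrite eqm mem_iota; lia.
case/mapP => i; rewrite mem_iota => hi ->; exists i; split => //; lia.
Qed.

Lemma occurs_lcp d (T : orderType d) (S : seq T) k j p :
  1 <= k <= j -> j <= size S -> 1 <= p ->
  occurs_at S k j p = ((j - k).+1 <= lcp_len (suf S p) (suf S k)).
Proof.
move=> /andP[k1 kj] jn p1.
rewrite /occurs_at /substr /suf lcp_take !size_drop addKn p1 /=.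
have -> : ((j-k).+1 <= size S - k.-1) = true by apply/idP; lia.
have -> : (p + (j-k) <= size S) = ((j-k).+1 <= size S - p.-1) by apply/idP/idP; lia.
by rewrite eq_sym.
Qed.

Lemma repeat_lcp d (T : orderType d) (S : seq T) k j :
  1 <= k <= j -> j <= size S ->
  is_repeat S k j = has (fun p => (p != k) && ((j - k).+1 <= lcp_len (suf S p) (suf S k)))
                        (iota 1 (size S)).
Proof.
move=> kj jn; apply: eq_in_has => p; rewrite mem_iota => /andP[p1 _].
by rewrite occurs_lcp.
Qed.

Definition Lk (rk lcpa : nat -> nat) k := maxn (lcpa (rk k)) (lcpa (rk k).+1).


Lemma neighbor d (T : orderType d) (S : seq T) rk lcpa k m :
  is_rank S rk -> is_lcp S rk lcpa -> 1 <= k <= size S -> 1 <= m ->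
  has (fun p => (p != k) && (m <= lcp_len (suf S p) (suf S k))) (iota 1 (size S))
   = (m <= Lk rk lcpa k).
Proof.
move=> [rng [inj ord]] [l1 [ln lr]] hk m1.
have surj := @rk_surj _ _ rng inj.
have rkk := rng k hk.
have injE : forall x y, 1 <= x <= size S -> 1 <= y <= size S -> rk x = rk y -> x = y.
  by move=> x y hx hy; apply: inj; rewrite inE.
rewrite /Lk leq_max; apply/hasP/idP.
- move=> [p]; rewrite mem_iota => hp /andP[pk mp].
  have hp' : 1 <= p <= size S by lia.
  have rkp := rng p hp'.
  have nrk : rk p != rk k.
    by apply/negP => /eqP /(injE _ _ hp' hk) /eqP; rewrite (negPf pk).
  case: (ltngtP (rk p) (rk k)) nrk => //= hlt _.
  + have [i [hi ri]] := surj (rk k).-1 ltac:(lia).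
    have rki : rk k = (rk i).+1 by lia.
    apply/orP; left; rewrite (lr i k hi hk rki).
    case: (eqVneq p i) mp => [-> //|pi] mp.
    have hpi : rk p < rk i by have := injE p i hp' hi; lia.
    apply: (leq_trans mp); apply: lexA.
      by rewrite -ord.
    by rewrite -ord // rki.
  + have [j [hj rj]] := surj (rk k).+1 ltac:(lia).
    apply/orP; right; rewrite -rj (lr k j hk hj rj) lcp_sym.
    case: (eqVneq p j) mp => [-> //|pj] mp.
    have hpj : rk j < rk p by have := injE p j hp' hj; lia.
    apply: (leq_trans mp); rewrite lcp_sym [X in _ <= X]lcp_sym; apply: lexB.
      by rewrite -ord // rj.
    by rewrite -ord.
- case/orP => hm.
  + have r2 : 2 <= rk k.
      case: (ltngtP (rk k) 1) hm => //; first lia.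
      by move=> ->; rewrite l1; lia.
    have [i [hi ri]] := surj (rk k).-1 ltac:(lia).
    have rki : rk k = (rk i).+1 by lia.
    exists i; first by rewrite mem_iota; lia.
    rewrite -(lr i k hi hk rki) hm andbT.
    apply/negP => /eqP ik; move: rki; rewrite ik; lia.
  + have r2 : rk k < size S.
      case: (ltngtP (rk k) (size S)) hm => //; first lia.
      by move=> ->; rewrite ln; lia.
    have [j [hj rj]] := surj (rk k).+1 ltac:(lia).
    exists j; first by rewrite mem_iota; lia.
    rewrite lcp_sym -(lr k j hk hj rj) rj hm andbT.
    apply/negP => /eqP ik; move: rj; rewrite ik; lia.
Qed.

Arguments neighbor {d T S rk lcpa k m}.

Lemma Lk_bound d (T : orderType d) (S : seq T) rk lcpa k :
  is_rank S rk -> is_lcp S rk lcpa -> 1 <= k <= size S ->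
  lcpa (rk k) <= size S - k.-1 /\ lcpa (rk k).+1 <= size S - k.-1.
Proof.
move=> [rng [inj ord]] [l1 [ln lr]] hk.
have surj := @rk_surj _ _ rng inj.
have rkk := rng k hk.
have sk : size (suf S k) = size S - k.-1 by rewrite /suf size_drop.
split.
- case: (ltngtP (rk k) 1) => [|r2|->]; [lia| |by rewrite l1].
  have [i [hi ri]] := surj (rk k).-1 ltac:(lia).
  have rki : rk k = (rk i).+1 by lia.
  by rewrite (lr i k hi hk rki) lcp_sym -sk lcp_size.
- case: (ltngtP (rk k) (size S)) => [r2||->]; [|lia|by rewrite ln].
  have [j [hj rj]] := surj (rk k).+1 ltac:(lia).
  by rewrite -rj (lr k j hk hj rj) -sk lcp_size.
Qed.

Arguments Lk_bound {d T S rk lcpa k}.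

Lemma repeat_L d (T : orderType d) (S : seq T) rk lcpa k j :
  is_rank S rk -> is_lcp S rk lcpa -> 1 <= k <= j -> j <= size S ->
  is_repeat S k j = (j - k < Lk rk lcpa k).
Proof.
move=> hr hl kj jn; rewrite repeat_lcp // (neighbor hr hl) // ; lia.
Qed.

Arguments repeat_L {d T S rk lcpa k j}.

Lemma LLR_char d (T : orderType d) (S : seq T) rk lcpa k j :
  is_rank S rk -> is_lcp S rk lcpa ->
  is_LLR S k j = [&& 1 <= k <= size S, 0 < Lk rk lcpa k & j == (k + Lk rk lcpa k).-1].
Proof.
move=> hr hl.
apply/idP/idP.
- case/and5P => k1 kj jn rep tl.
  have hk : 1 <= k <= size S by lia.
  have [b1 b2] := Lk_bound hr hl hk.
  have Lb : Lk rk lcpa k <= size S - k.-1 by rewrite /Lk geq_max b1 b2.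
  rewrite (repeat_L hr hl) ?k1 ?kj // in rep.
  case: (eqVneq j (size S)) => [jE | jn''].
    rewrite hk /=; apply/andP; split; [lia | apply/eqP; lia].
  have jn' : j < size S by rewrite ltn_neqAle jn'' jn.
  rewrite (negPf jn'') /= in tl.
  move: tl; rewrite /is_unique (repeat_L hr hl) ?jn' ?k1 //; last lia.
  move=> un; apply/and3P; split; [lia|lia|apply/eqP; lia].
- case/and3P => hk L0 /eqP ->.
  have [b1 b2] := Lk_bound hr hl hk.
  have Lb : Lk rk lcpa k <= size S - k.-1 by rewrite /Lk geq_max b1 b2.
  rewrite /is_LLR.
  have k1 : 1 <= k by lia.
  have kj : k <= (k + Lk rk lcpa k).-1 by lia.
  have jn : (k + Lk rk lcpa k).-1 <= size S by lia.
  rewrite k1 kj jn (repeat_L hr hl) ?k1 ?kj //=.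
  apply/andP; split; first lia.
  case: (eqVneq (k + Lk rk lcpa k).-1 (size S)) => //= jn'.
  rewrite /is_unique (repeat_L hr hl); lia.
Qed.

Arguments LLR_char {d T S rk lcpa k j}.

Lemma best_lt f m x : 0 < x ->
  (bestf f m.+1 < x) = all (fun i => (0 < f i) ==> ((i + f i).-1 < x)) (iota 1 m).
Proof.
move=> x0; elim: m => [|m IH]; first by rewrite /bestf big_geq.
have -> : bestf f m.+2 = maxn (bestf f m.+1) (if 0 < f m.+1 then (m.+1 + f m.+1).-1 else 0).
  by rewrite /bestf big_mkcond big_nat_recr //= -big_mkcond.
have -> : iota 1 m.+1 = iota 1 m ++ [:: m.+1] by rewrite -(addn1 m) iotaD /= add1n addn1.
rewrite gtn_max IH all_cat /= andbT.
by case: (0 < f m.+1); rewrite /= ?x0 ?andbT.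
Qed.

Lemma best_lt' f k x : 1 <= k -> 0 < x ->
  (bestf f k < x) = all (fun i => (0 < f i) ==> ((i + f i).-1 < x)) (iota 1 k.-1).
Proof. by case: k => // m _; exact: best_lt. Qed.

Lemma useful_char d (T : orderType d) (S : seq T) rk lcpa k j :
  is_rank S rk -> is_lcp S rk lcpa -> 1 <= k <= size S ->
  is_useful_LLR S k j = [&& 0 < Lk rk lcpa k,
     bestf (Lk rk lcpa) k < (k + Lk rk lcpa k).-1 & j == (k + Lk rk lcpa k).-1].
Proof.
move=> hr hl hk.
set L := Lk rk lcpa.
have bnd : forall i, 1 <= i <= size S -> i + L i <= (size S).+1.
  move=> i hi; have [b1 b2] := Lk_bound hr hl hi; rewrite /L /Lk; lia.
rewrite /is_useful_LLR (LLR_char hr hl) hk /=.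
case L0: (0 < L k) => //=.
case: (eqVneq j (k + L k).-1) => [jE | jne]; last by rewrite andbF.
rewrite andbT.
rewrite best_lt'; [|lia|lia].
rewrite /= -[RHS]negbK -has_predC; congr (~~ _).
apply/hasP/hasP.
- move=> [k' hk' /hasP [j' hj' /and4P [llr ne k'k jj']]].
  rewrite (LLR_char hr hl) in llr.
  case/and3P: llr => hk'' Lk' /eqP je.
  case: (eqVneq k' k) ne => [ek|nek] ne.
    by move: ne; rewrite je jE ek eqxx.
  exists k'; first by rewrite mem_iota; lia.
  by rewrite /= negb_imply Lk' -leqNgt -je -jE jj'.
- move=> [i hi]; rewrite /= negb_imply -leqNgt => /andP [Li ei].
  move: hi; rewrite mem_iota => hi.
  exists i; first by rewrite mem_iota; lia.
  have hi' : 1 <= i <= size S by lia.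
  have := bnd i hi' => bi.
  apply/hasP; exists (i + L i).-1; first by rewrite mem_iota; lia.
  rewrite (LLR_char hr hl) hi' Li eqxx /=.
  apply/and3P; split; [|lia|by rewrite jE].
  by rewrite xpair_eqE; apply/nandP; left; apply/eqP; lia.
Qed.

Lemma encode_flat (A : Type) (g : A -> seq (nat * nat)) s :
  encode_pairs (flatten [seq g k | k <- s]) = flatten [seq encode_pairs (g k) | k <- s].
Proof.
elim: s => //= a s IH; by rewrite /encode_pairs map_cat flatten_cat -IH.
Qed.

Lemma filter_false (A : Type) (s : seq A) : filter (fun _ => false) s = [::].
Proof. by elim: s. Qed.

Lemma useful_out d (T : orderType d) (S : seq T) rk lcpa :
  is_rank S rk -> is_lcp S rk lcpa ->
  encode_pairs (useful_LLRs S) = outl (Lk rk lcpa) (size S).+1.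
Proof.
move=> hr hl.
set L := Lk rk lcpa.
rewrite /useful_LLRs filter_flatten -map_comp encode_flat /outl /=.
congr flatten; apply/eq_in_map => k; rewrite mem_iota => hk /=.
have hk' : 1 <= k <= size S by lia.
rewrite filter_map.
rewrite (eq_in_filter (a2 := fun j => [&& 0 < L k, bestf L k < (k + L k).-1 & j == (k + L k).-1])); last first.
  by move=> j _; rewrite /preim /= (@useful_char _ _ _ _ _ _ _ hr hl hk').
rewrite /item; case: ifP => c.
  rewrite (eq_filter (a2 := pred1 (k + L k).-1)); last by move=> j; rewrite andbA c.
  have [b1 b2] := Lk_bound hr hl hk'.
  rewrite filter_pred1_uniq ?iota_uniq //.
  case/andP: c => c1 _; rewrite mem_iota; rewrite /L /Lk in c1 *; lia.
rewrite (eq_filter (a2 := fun _ => false)); first by rewrite filter_false.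
by move=> j; rewrite andbA c.
Qed.

Theorem lemma6 :
  exists (P : seq instr) (c : nat),
    forall (d : Order.disp_t) (T : orderType d) (S : seq T)
           (rk lcpa : nat -> nat),
      is_rank S rk -> is_lcp S rk lcpa ->
      runs_within P (input_mem (size S) rk lcpa)
        (c * size S + c) (c * size S + c) ((size S).+2 ^ c)
        (encode_pairs (useful_LLRs S)).
Proof.
exists Prog, 20 => d T S rk lcpa hr hl.
rewrite (@useful_out _ _ _ _ _ hr hl).
have hr' := hr; case: hr' => [rng _].
apply: machine.
- by rewrite /input_mem.
- move=> k hk.
  have rkk := rng k hk.
  have [b1 b2] := Lk_bound hr hl hk.
  exists (rk k).
  have E1 : input_mem (size S) rk lcpa k = rk k.
    rewrite /input_mem; case: eqP => [?|_]; first lia.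
    by case: hk => /andP [_ ->].
  have E2 : input_mem (size S) rk lcpa (size S + rk k) = lcpa (rk k).
    rewrite /input_mem; case: eqP => [?|_]; first lia.
    rewrite ifN; last by rewrite -ltnNge; lia.
    rewrite ifT; last lia.
    by rewrite addKn.
  have E3 : input_mem (size S) rk lcpa (size S + rk k + 1) = lcpa (rk k).+1.
    rewrite /input_mem; case: eqP => [?|_]; first lia.
    rewrite ifN; last by rewrite -ltnNge; lia.
    rewrite ifT; last lia.
    by rewrite -addnA addKn addn1.
  rewrite E1 E2 E3; split => //; lia.
- move=> k hk; have [b1 b2] := Lk_bound hr hl hk; rewrite /Lk; lia.
Qed.
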